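(* Let $M$ be a finite matroid, $k\ge0$, let $e_1,\dots,e_k$ be distinct elements of $M$ and $C_0,C_1,\dots,C_k$ subsets of $M$ such that $|C_i|\ge3$ for $i=0,\dots,k$, $C_{i-1}\cap C_i=\{e_i\}$ for $i=1,\dots,k$, and $C_i\cap C_j=\emptyset$ whenever $|i-j|\ge2$. Let $e_0\in C_0\setminus\{e_1\}$ and, for $i=1,\dots,k$, let $e_i'\in C_{i-1}\setminus\{e_{i-1},e_i\}$. Define $M_0=M$ and $M_i=M_{i-1}/(C_{i-1}\setminus\{e_i,e_i'\})$ for $i=1,\dots,k$. If $C_i$ is a circuit in $M_i$ for every $i=0,1,\dots,k$, then $M$ contains a circuit of length at least $k+3$ that contains $e_0$.
   Context: For a finite matroid $M$ with rank function $r_M$ and $F\subseteq M$, the contraction $M/F$ has ground set $M\setminus F$, and $F'\subseteq M\setminus F$ is independent in $M/F$ iff $F'$ is independent in $M$ and $r_M(F\cup F')=r_M(F)+r_M(F')$. A circuit is a minimal dependent set; its length is its number of elements. *)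

(* Defs.v *)
From mathcomp Require Import all_boot.
Set Implicit Arguments. Unset Strict Implicit. Unset Printing Implicit Defensive.

Record mat (T : finType) := Mat { mground : {set T}; mindep : {set T} -> bool }.

Section Matroid.
Variable T : finType.

Definition is_matroid (M : mat T) : Prop :=
  [/\ mindep M set0,
      (forall A : {set T}, mindep M A -> A \subset mground M),
      (forall A B : {set T}, mindep M B -> A \subset B -> mindep M A)
    & (forall A B : {set T}, mindep M A -> mindep M B -> #|A| < #|B| ->
         exists2 x, x \in B :\: A & mindep M (x |: A))].

Definition mrank (M : mat T) (X : {set T}) : nat :=
  \max_(Y in powerset X | mindep M Y) #|Y|.

Definition contract (M : mat T) (F : {set T}) : mat T :=
  Mat (mground M :\: F)
      (fun F' => [&& F' \subset mground M :\: F, mindep M F' &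
                   mrank M (F :|: F') == mrank M F + mrank M F']).

Definition circuit (M : mat T) (C : {set T}) : Prop :=
  [/\ C \subset mground M, ~~ mindep M C &
      forall D : {set T}, D \proper C -> mindep M D].

Fixpoint Mseq (M : mat T) (C : nat -> {set T}) (e e' : nat -> T) (i : nat)
  : mat T :=
  match i with
  | 0 => M
  | j.+1 => contract (Mseq M C e e' j) (C j :\: [set e j.+1; e' j.+1])
  end.

End Matroid.

(* Main.v *)
Require Import Defs.
From mathcomp Require Import all_boot.
Set Implicit Arguments. Unset Strict Implicit. Unset Printing Implicit Defensive.

Section Aux.
Variable T : finType.
Implicit Types (M : mat T) (A B X Y S F : {set T}).

Lemma mat_down M A B : is_matroid M -> mindep M B -> A \subset B -> mindep M A.
Proof. by case=> _ _ hd _; apply: hd. Qed.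

Lemma mrank_le M X : mrank M X <= #|X|.
Proof.
rewrite /mrank; apply/bigmax_leqP => Y /andP[]; rewrite inE => /subset_leq_card //.
Qed.

Lemma mrank_indep M X : mindep M X -> mrank M X = #|X|.
Proof.
move=> hX; apply/eqP; rewrite eqn_leq mrank_le /=.
by apply: (@leq_bigmax_cond _ (fun Y => (Y \in powerset X) && mindep M Y) (fun Y => #|Y|) X); rewrite inE subxx hX.
Qed.

Lemma mrank_eq_indep M X : is_matroid M -> mrank M X = #|X| -> mindep M X.
Proof.
move=> hM hr; apply/negPn/negP => hX.
have hX0 : X != set0.
  apply/eqP => E; move: hX; rewrite E; case: hM => -> //.
have : mrank M X <= #|X|.-1.
  apply/bigmax_leqP => Y /andP[]; rewrite inE => hYX hY.
  have hYne : Y != X by apply/eqP => E; move: hX; rewrite -E hY.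
  have : Y \proper X by rewrite properEneq hYne hYX.
  by move/proper_card; case: #|X|.
rewrite hr; move: hX0; rewrite -card_gt0; case: #|X| => [|n] //= _; by rewrite ltnn.
Qed.

Lemma cardUdisj M F X : X \subset mground M :\: F -> #|F :|: X| = #|F| + #|X|.
Proof.
move=> hX; rewrite cardsU.
suff -> : F :&: X = set0 by rewrite cards0 subn0.
apply/setP => x; rewrite !inE; case hx: (x \in X); last by rewrite andbF.
by move: (subsetP hX x hx); rewrite !inE => /andP[/negbTE ->].
Qed.

Lemma contract_indep M F X : is_matroid M -> mindep M F ->
  mindep (contract M F) X = (X \subset mground M :\: F) && mindep M (F :|: X).
Proof.
move=> hM hF; rewrite /contract /=.
case hXs: (X \subset _) => //=.
apply/andP/idP.
  case=> hX /eqP hr; apply: mrank_eq_indep => //.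
  apply/eqP; rewrite eqn_leq mrank_le /= hr !mrank_indep // cardsU; exact: leq_subr.
move=> hFX; have hX := mat_down hM hFX (subsetUr F X); split => //.
by rewrite !mrank_indep // (cardUdisj hXs).
Qed.

Lemma contract_matroid M F : is_matroid M -> mindep M F -> is_matroid (contract M F).
Proof.
move=> hM hF; have hM' := hM; case: hM' => h0 hg hd haug.
split.
- by rewrite contract_indep // sub0set setU0 hF.
- by move=> A; rewrite contract_indep // => /andP[].
- move=> A B; rewrite !contract_indep // => /andP[hB hFB] hAB.
  rewrite (subset_trans hAB hB) /=; apply: mat_down hM hFB _; exact: setUS.
- move=> A B; rewrite !contract_indep // => /andP[hA hFA] /andP[hB hFB] hlt.
  case: (haug _ _ hFA hFB); first by rewrite !(cardUdisj hA) !(cardUdisj hB) ltn_add2l.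
  move=> x; rewrite !inE => /andP[hxn hx] hind.
  have hxA : x \notin A by move: hxn; rewrite negb_or => /andP[].
  have hxB : x \in B by move: hxn hx; rewrite negb_or => /andP[/negbTE -> _].
  exists x; first by rewrite inE hxA hxB.
  rewrite contract_indep // setUCA hind andbT.
  apply/subsetP => y; rewrite in_setU1 => /orP[/eqP->|hy]; [exact: (subsetP hB _ hxB) | exact: (subsetP hA _ hy)].
Qed.

Lemma Mseq_shift M C e e' i :
  Mseq M C e e' i.+1 = Mseq (contract M (C 0 :\: [set e 1; e' 1]))
     (fun j => C j.+1) (fun j => e j.+1) (fun j => e' j.+1) i.
Proof.
elim: i => [|i IH]; first by [].
change (contract (Mseq M C e e' i.+1) (C i.+1 :\: [set e i.+2; e' i.+2]) =
  contract (Mseq (contract M (C 0 :\: [set e 1; e' 1]))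
     (fun j => C j.+1) (fun j => e j.+1) (fun j => e' j.+1) i) (C i.+1 :\: [set e i.+2; e' i.+2])).
by rewrite IH.
Qed.

Lemma augment_full M A B : is_matroid M -> mindep M A -> mindep M B ->
  exists A', [/\ mindep M A', A \subset A', A' \subset A :|: B & #|B| <= #|A'|].
Proof.
move=> hM; have hM' := hM; case: hM' => _ _ _ haug.
move: {2}(#|B| - #|A|) (leqnn (#|B| - #|A|)) => n.
elim: n A => [|n IH] A hn hA hB.
  by exists A; split => //; [exact: subsetUl | rewrite -subn_eq0 -leqn0].
case: (leqP #|B| #|A|) => hle.
  by exists A; split => //; exact: subsetUl.
case: (haug _ _ hA hB hle) => x; rewrite inE => /andP[hxA hxB] hxi.
have [|A' [h1 h2 h3 h4]] := IH (x |: A) _ hxi hB.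
  rewrite cardsU1 hxA add1n subnS; move: hn; case: (#|B| - #|A|) => //.
exists A'; split => //.
- exact: subset_trans (subsetUr _ _) h2.
- apply: subset_trans h3 _; by rewrite !subUset sub1set subsetUl subsetUr !inE hxB orbT.
Qed.

End Aux.


Section Aux2.
Variable T : finType.
Implicit Types (M : mat T) (A B X Y S F : {set T}).

Lemma min_dep M n S : #|S| <= n -> ~~ mindep M S ->
  exists2 D : {set T}, D \subset S & ~~ mindep M D /\ forall D0 : {set T}, D0 \proper D -> mindep M D0.
Proof.
elim: n S => [|n IH] S hn hS.
  exists S => //; split => // D0 /proper_card; move: hn; rewrite leqn0 => /eqP ->//.
case: (boolP [exists D0 : {set T}, (D0 \proper S) && ~~ mindep M D0]).
  case/existsP => D0 /andP[hp hd].
  have [|D h1 h2] := IH D0 _ hd.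
    by rewrite -ltnS; apply: leq_trans (proper_card hp) hn.
  exists D => //; exact: subset_trans h1 (proper_sub hp).
rewrite negb_exists => /forallP hall.
exists S => //; split => // D0 hp.
by move: (hall D0); rewrite hp /= negbK.
Qed.

Lemma circuit_in M S : is_matroid M -> S \subset mground M -> ~~ mindep M S ->
  exists D, [/\ circuit M D, D \subset S &
     forall y, y \in S -> mindep M (S :\ y) -> y \in D].
Proof.
move=> hM hSg hS.
have [D hDS [hD hDm]] := min_dep (leqnn #|S|) hS.
exists D; split => //.
  by split => //; exact: subset_trans hDS hSg.
move=> y hy hi; apply/negPn/negP => hyD; apply: (negP hD).
apply: mat_down hM hi _; apply/subsetP => z hz; rewrite !inE (subsetP hDS _ hz) andbT.
by apply/eqP => E; move: hyD; rewrite -E hz.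
Qed.

Lemma swap M C0 F W a b : is_matroid M -> circuit M C0 -> a \in C0 -> b \in C0 -> a != b ->
  F \subset C0 -> C0 \subset a |: (b |: F) -> a \notin F :|: W -> b \notin F :|: W ->
  mindep M (a |: (F :|: W)) -> mindep M (b |: (F :|: W)).
Proof.
move=> hM [hC0g hC0d hC0m] ha hb hab hF hC0 haFW hbFW hB.
have haF : a \notin F by move: haFW; rewrite inE negb_or => /andP[].
have hA : mindep M (b |: F).
  apply: hC0m; rewrite properE subUset sub1set hb hF /=.
  apply/subsetPn; exists a => //; by rewrite !inE negb_or hab haF.
have [A' [hA' hs1 hs2 hc]] := augment_full hM hA hB.
have haA' : a \notin A'.
  apply/negP => haA; apply: (negP hC0d); apply: mat_down hM hA' _.
  by apply: subset_trans hC0 _; rewrite subUset sub1set haA hs1.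
have hT : A' \subset b |: (F :|: W).
  apply/subsetP => x hx.
  case: (eqVneq x a) => [xa|xna]; first by move: haA'; rewrite -xa hx.
  move: (subsetP hs2 x hx); rewrite !inE (negbTE xna) /=.
  by case/orP => [/orP[]|/orP[]] ->; rewrite ?orbT.
have : A' == b |: (F :|: W).
  rewrite eqEcard hT /= (cardsU1 b) hbFW.
  by rewrite (cardsU1 a) haFW in hc.
by move/eqP <-.
Qed.

End Aux2.


Section Aux3.
Variable T : finType.
Implicit Types (M : mat T) (A B X Y S F : {set T}).

Lemma local M C0 F D' (e0 a1 b1 : T) : is_matroid M -> circuit M C0 ->
  a1 \in C0 -> b1 \in C0 -> e0 \in C0 -> a1 != b1 -> e0 != a1 -> e0 != b1 ->
  F = C0 :\: [set a1; b1] -> circuit (contract M F) D' -> a1 \in D' -> 3 <= #|D'| ->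
  exists D, [/\ circuit M D, #|D'| < #|D| & e0 \in D].
Proof.
move=> hM hC0 ha hb he hab hea heb hF hD' haD' hD'3.
have [hC0g hC0d hC0m] := hC0.
have hFsub : F \subset C0 by rewrite hF subsetDl.
have haF : a1 \notin F by rewrite hF !inE eqxx.
have hbF : b1 \notin F by rewrite hF !inE eqxx orbT.
have heF : e0 \in F by rewrite hF !inE negb_or he hea heb.
have hC0ab : C0 \subset a1 |: (b1 |: F).
  apply/subsetP => x hx; rewrite hF !inE hx.
  by case: (x == a1); case: (x == b1).
have hC0ba : C0 \subset b1 |: (a1 |: F) by rewrite setUCA.
have hFi : mindep M F.
  apply: hC0m; rewrite properE hFsub /=; apply/subsetPn; exists a1 => //.
have [hD'g hD'd hD'm] := hD'.
rewrite /= in hD'g.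
have hcI X : mindep (contract M F) X = (X \subset mground M :\: F) && mindep M (F :|: X)
  := contract_indep X hM hFi.
have hFD' : ~~ mindep M (F :|: D') by move: hD'd; rewrite hcI hD'g.
have hsubD X : X \proper D' -> mindep M (F :|: X).
  by move=> hX; move: (hD'm X hX); rewrite hcI => /andP[].
have hbD' : b1 \notin D'.
  apply/negP => hbD.
  have : [set a1; b1] \proper D'.
    by rewrite properEcard subUset !sub1set haD' hbD cards2 hab.
  move/hsubD => hi; apply: (negP hC0d); apply: mat_down hM hi _.
  rewrite hF; apply/subsetP => x hx; rewrite !inE hx.
  by case: (x == a1); case: (x == b1).
set Z := D' :\ a1.
have hZD' : Z \subset D' by apply: subsetDl.
have hZg : Z \subset mground M :\: F := subset_trans hZD' hD'g.
have hFZ : mindep M (F :|: Z) by apply: hsubD; apply: properD1.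
have hFZ' z : z \in Z -> mindep M (F :|: (D' :\ z)).
  by move=> hz; apply: hsubD; apply: properD1; apply: (subsetP hZD').
have heZ : e0 \notin Z.
  by apply/negP => /(subsetP hZg); rewrite !inE heF.
have haZ : a1 \notin Z by rewrite !inE eqxx.
have hbZ : b1 \notin Z by rewrite !inE (negbTE hbD') andbF.
have hQ : exists2 x, (x == a1) || (x == b1) & mindep M (x |: ((F :\ e0) :|: Z)).
  have hA : mindep M (C0 :\ e0) by apply: hC0m; apply: properD1.
  have [A' [hA' hs1 hs2 hc]] := augment_full hM hA hFZ.
  have heA' : e0 \notin A'.
    apply/negP => heA; apply: (negP hC0d); apply: mat_down hM hA' _.
    by rewrite -(setD1K he) subUset sub1set heA hs1.
  have hlt : #|(F :\ e0) :|: Z| < #|A'|.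
    apply: leq_trans hc; apply: proper_card; rewrite properE; apply/andP; split.
      apply/subsetP => x; rewrite !inE.
      by case/orP => [/andP[_ ->]|->]; rewrite ?orbT.
    apply/subsetPn; exists e0; first by rewrite !inE heF.
    by rewrite in_setU in_setD1 eqxx /= (negbTE heZ).
  have [_ _ _ haug] := hM.
  have hsub0 : (F :\ e0) :|: Z \subset F :|: Z by apply: setSU; apply: subsetDl.
  case: (haug _ _ (mat_down hM hFZ hsub0) hA' hlt) => x hx hxi.
  exists x => //.
  move: hx; rewrite inE => /andP[hxn hxA'].
  have hxe : x != e0 by apply/eqP => E; move: heA'; rewrite -E hxA'.
  move: hxn; rewrite !inE (negbTE hxe) /= negb_or => /andP[hxF hxZ].
  move: (subsetP hs2 x hxA'); rewrite !inE (negbTE hxe) (negbTE hxF) (negbTE hxZ) /= orbF => hxC.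
  by move: (subsetP hC0ab x hxC); rewrite !inE (negbTE hxF) orbF.

have hdepA : ~~ mindep M (a1 |: (F :|: Z)).
  apply: contra hFD' => hi; apply: mat_down hM hi _.
  apply/subsetP => y; rewrite !inE.
  by case: (eqVneq y a1) => [->|_]; case: (y \in F); case: (y \in D').
have hZsub : forall z, z \in Z -> ~~ mindep M (a1 |: (F :|: (Z :\ z))) -> False.
  move=> z hz hn; apply: (negP hn); apply: mat_down hM (hFZ' z hz) _.
  apply/subsetP => y; rewrite !inE.
  have hza : a1 != z by apply/eqP => E; move: haZ; rewrite E hz.
  case: (eqVneq y a1) => [->|hya]; first by rewrite hza haD' orbT.
  by case: (y == z); case: (y \in F); case: (y \in D').
case: hQ => x hx hxi.
have hxC0 : x \in C0 by case/orP: hx => /eqP->.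
have hxF : x \notin F by case/orP: hx => /eqP->.
have hxZ : x \notin Z by case/orP: hx => /eqP->.
have hxe : x != e0 by case/orP: hx => /eqP->; rewrite eq_sym.
set S := x |: (F :|: Z).
have hSg : S \subset mground M.
  rewrite subUset sub1set (subsetP hC0g _ hxC0) subUset (subset_trans hFsub hC0g) /=.
  by apply: subset_trans hZg _; apply: subsetDl.
have habFZ : a1 \notin F :|: Z by rewrite in_setU negb_or haF.
have hbbFZ : b1 \notin F :|: Z by rewrite in_setU negb_or hbF.
have hSd : ~~ mindep M S.
  case/orP: hx => /eqP xE; rewrite /S xE //.
  apply/negP => hi; apply: (negP hdepA).
  by apply: (swap hM hC0 hb ha _ hFsub hC0ba hbbFZ habFZ hi); rewrite eq_sym.
have [D [hD hDS hDy]] := circuit_in hM hSg hSd.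
have hxD : x \in D.
  apply: hDy; first by rewrite /S in_setU1 eqxx.
  apply: mat_down hM hFZ _; apply/subsetP => y; rewrite /S !inE.
  by case: (y == x).
have heD : e0 \in D.
  apply: hDy; first by rewrite /S in_setU1 in_setU heF orbT.
  apply: mat_down hM hxi _; apply/subsetP => y; rewrite /S !inE.
  by case: (y == e0); case: (y == x).
have hZD : Z \subset D.
  apply/subsetP => z hz; apply: hDy; first by rewrite /S in_setU1 in_setU hz !orbT.
  have hzF : z \notin F by apply/negP => hzF; move: (subsetP hZg _ hz); rewrite inE hzF.
  case/orP: hx => /eqP xE; rewrite /S xE.
    apply: mat_down hM (hFZ' z hz) _.
    apply/subsetP => y; rewrite !inE.
    have hza : a1 != z by apply/eqP => E; move: haZ; rewrite E hz.
    case: (eqVneq y a1) => [->|hya]; first by rewrite hza haD' orbT.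
    by case: (y == z); case: (y \in F); case: (y \in D').
  have hi : mindep M (b1 |: (F :|: (Z :\ z))).
    apply: (swap hM hC0 ha hb hab hFsub hC0ab).
    - by rewrite in_setU negb_or haF in_setD1 (negbTE haZ) andbF.
    - by rewrite in_setU negb_or hbF in_setD1 (negbTE hbZ) andbF.
    by apply/negPn/negP => hn; apply: (hZsub z hz hn).
  apply: mat_down hM hi _.
  apply/subsetP => y; rewrite !inE.
  by case: (y == z); case: (y == b1); case: (y \in F).
exists D; split => //.
have : x |: (e0 |: Z) \subset D by rewrite !subUset !sub1set hxD heD hZD.
move/subset_leq_card; rewrite !cardsU1 (negbTE heZ) in_setU1 (negbTE hxe) (negbTE hxZ) /=.
by rewrite (cardsD1 a1 D') haD'.
Qed.

End Aux3.


Lemma helper (T : finType) k : forall (M : mat T) (e e' : nat -> T) (C : nat -> {set T}),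
  is_matroid M ->
  (forall i, i < k -> e i != e i.+1) ->
  e 0 \in C 0 ->
  (forall i, i < k -> e i.+1 \in C i) ->
  (forall i, i < k -> e i.+1 \in C i.+1) ->
  (forall i, i <= k -> 3 <= #|C i|) ->
  (forall i, i < k -> e' i.+1 \in C i :\: [set e i; e i.+1]) ->
  (forall i, i <= k -> circuit (Mseq M C e e' i) (C i)) ->
  exists D : {set T}, [/\ circuit M D, k + 3 <= #|D| & e 0 \in D].
Proof.
elim: k => [|k IH] M e e' C hM hne he0 hl hr hsz he' hc.
  by exists (C 0); split => //; [apply: (hc 0) | apply: (hsz 0)].
set F := C 0 :\: [set e 1; e' 1].
have hC0 : circuit M (C 0) := hc 0 isT.
have [hC0g hC0d hC0m] := hC0.
have he1 : e 1 \in C 0 := hl 0 isT.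
have := he' 0 isT; rewrite !inE negb_or => /andP[/andP[hne0 hne1] hb].
have hFi : mindep M F.
  apply: hC0m; rewrite properE subsetDl /=; apply/subsetPn; exists (e 1) => //.
  by rewrite !inE eqxx.
have hN := contract_matroid hM hFi.
have hcN : forall i, i <= k -> circuit (Mseq (contract M F) (fun j => C j.+1)
    (fun j => e j.+1) (fun j => e' j.+1) i) (C i.+1).
  by move=> i hi; rewrite -Mseq_shift; apply: hc.
have [D' [hD' hD'k hD'e]] := IH (contract M F) (fun j => e j.+1) (fun j => e' j.+1)
  (fun j => C j.+1) hN (fun i hi => hne i.+1 hi) (hr 0 isT) (fun i hi => hl i.+1 hi)
  (fun i hi => hr i.+1 hi) (fun i hi => hsz i.+1 hi) (fun i hi => he' i.+1 hi) hcN.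
have h1 : e 1 != e' 1 by rewrite eq_sym.
have h2 : e 0 != e' 1 by rewrite eq_sym.
have h3 : 3 <= #|D'| by apply: leq_trans hD'k; rewrite leq_addl.
have [D [hD hDc hDe]] := local hM hC0 he1 hb he0 h1 (hne 0 isT) h2 (erefl F) hD' hD'e h3.
exists D; split => //.
by rewrite addSn; apply: leq_ltn_trans hDc.
Qed.

Theorem lemma3p12 (T : finType) (M : mat T) (k : nat)
  (e e' : nat -> T) (C : nat -> {set T}) :
  is_matroid M ->
  (forall i, 1 <= i <= k -> e i \in mground M) ->
  (forall i j, 1 <= i <= k -> 1 <= j <= k -> e i = e j -> i = j) ->
  (forall i, i <= k -> C i \subset mground M) ->
  (forall i, i <= k -> 3 <= #|C i|) ->
  (forall i, 1 <= i <= k -> C i.-1 :&: C i = [set e i]) ->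
  (forall i j, i <= k -> j <= k -> i + 2 <= j -> C i :&: C j = set0) ->
  e 0 \in C 0 :\ e 1 ->
  (forall i, 1 <= i <= k -> e' i \in C i.-1 :\: [set e i.-1; e i]) ->
  (forall i, i <= k -> circuit (Mseq M C e e' i) (C i)) ->
  exists D : {set T}, [/\ circuit M D, k + 3 <= #|D| & e 0 \in D].
Proof.
move=> hM _ hdist _ hsz hint _ he0 he' hc.
have hin i : i < k -> (e i.+1 \in C i) && (e i.+1 \in C i.+1).
  by move=> hi; have := set11 (e i.+1); rewrite -(hint i.+1 hi) inE.
move: he0; rewrite !inE => /andP[hne01 he0].
apply: (@helper T k M e e' C) => //.
- case=> [|i] hi; first exact: hne01.
  apply/eqP => E; have := hdist i.+1 i.+2 _ _ E.
  by move=> /(_ (ltnW hi) hi) /eqP; rewrite eqSS (ltn_eqF (ltnSn i)).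
- by move=> i hi; case/andP: (hin i hi).
- by move=> i hi; case/andP: (hin i hi).
- by move=> i hi; apply: (he' i.+1).
Qed.
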